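(* Under the hypotheses of Theorem 1, and assuming moreover $W_u[0]>\tau/(1-\sigma f)$, with the user following $\pi_u$ and the adversary following $\pi_a$ in a game with unboundedly many epochs, the fraction of user MEV transactions that are front-run during epoch $e$, namely $$\frac{\lfloor \tilde W_a[e-1]/y\rfloor}{\lceil (\tilde W_u[e-1]-\tau)/y\rceil},$$ tends to $0$ as $e\to\infty$.
   Context: Token game (Masquerade model). Discrete rounds; a user and an adversary with initial wealths $W_u[0]$, $W_a[0]$; token cost $y>0$, MEV profit $\eta>0$, front-run fraction $f\in(0,1)$, user threshold $\tau>0$. Tokens cost $y$, have numbers increasing in purchase order, never expire, are single-use, and are refunded $y$ when used. Each round the user makes at most one tokenized MEV transaction with token $T_u$; it is front-run iff the adversary uses a token $T_a<T_u$; front-run: user earns $\eta-f\eta$, adversary $f\eta$; otherwise user earns $\eta$, adversary $0$. User policy $\pi_u$: each round buy one token if available wealth exceeds $y$; if available wealth $\le\tau$, make a tokenized MEV transaction with its lowest unused token. Adversary policy $\pi_a$: knows the user's tokens; each round buys $\lfloor (\text{available wealth})/y\rfloor$ tokens, purchases ordered before the user's; front-runs each user transaction with its largest unused token below $T_u$ if one exists. Epochs: the first ends when the user's available wealth drops below $\tau$; each later epoch ends once the user has used all tokens bought in the previous epoch and its available wealth drops below $\tau$. During epoch $e$ the user makes $\lceil (\tilde W_u[e-1]-\tau)/y\rceil$ MEV transactions and the adversary front-runs $\lfloor \tilde W_a[e-1]/y\rfloor$ of them. $\tilde W_a[e]$, $\tilde W_u[e]$: total wealth (available plus locked in tokens)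 at end of epoch $e$, with $\tilde W_a[0]=W_a[0]$, $\tilde W_u[0]=W_u[0]$. Theorem 1 hypotheses: $0<\sigma<1/2$, $\epsilon<\frac{yf+f^2\eta}{\eta(1-f)}$, $W_a[0]<\sigma W_u[0]$, $f<\frac{1-\sigma-\epsilon}{1+\sigma}$, $W_a[0]>\frac{y^2}{\eta\epsilon}$, $\tau<\epsilon W_u[0]$. *)

(* Defs.v *)
From Stdlib Require Import Reals.
Open Scope R_scope.

(* floor and ceiling on R. Int_part r = up r - 1 is the floor of r. *)
Definition Rfloor (x : R) : R := IZR (Int_part x).
Definition Rceil (x : R) : R := - Rfloor (- x).

(* Number of MEV transactions the user makes during an epoch that starts with
   user total wealth wu:  ceil ((wu - tau) / y). *)
Definition n_user (y tau wu : R) : R := Rceil ((wu - tau) / y).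
(* Number of those that the adversary front-runs, given adversary total
   wealth wa at the start of the epoch:  floor (wa / y). *)
Definition n_adv (y wa : R) : R := Rfloor (wa / y).

(* Tokens are refunded when used, so total wealth only changes
   through MEV profits: each front-run gives the adversary f*eta and the user
   eta - f*eta; each non-front-run transaction gives the user eta. *)
Fixpoint wealth (y eta f tau Wu0 Wa0 : R) (e : nat) : R * R :=
  match e with
  | O => (Wu0, Wa0)
  | S e' =>
      let (wu, wa) := wealth y eta f tau Wu0 Wa0 e' in
      let nu := n_user y tau wu in
      let na := n_adv y wa in
      (wu + (nu - na) * eta + na * (eta - f * eta), wa + na * (f * eta))
  end.

Definition Wu_t (y eta f tau Wu0 Wa0 : R) (e : nat) : R :=
  fst (wealth y eta f tau Wu0 Wa0 e).
Definition Wa_t (y eta f tau Wu0 Wa0 : R) (e : nat) : R :=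
  snd (wealth y eta f tau Wu0 Wa0 e).

Definition frontrun_fraction (y eta f tau Wu0 Wa0 : R) (e : nat) : R :=
  n_adv y (Wa_t y eta f tau Wu0 Wa0 (e - 1))
  / n_user y tau (Wu_t y eta f tau Wu0 Wa0 (e - 1)).

(* Main.v *)
Require Import Defs.
From Stdlib Require Import Reals Lra Lia Psatz.
Open Scope R_scope.

Lemma floor_le x : Rfloor x <= x.
Proof. unfold Rfloor. destruct (base_Int_part x); lra. Qed.

Lemma floor_gt x : x - 1 < Rfloor x.
Proof. unfold Rfloor. destruct (base_Int_part x); lra. Qed.

Lemma ceil_ge x : x <= Rceil x.
Proof. unfold Rceil. pose proof (floor_le (- x)). lra. Qed.

Lemma floor_nonneg x : 0 <= x -> 0 <= Rfloor x.
Proof.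
  intro H. pose proof (floor_gt x). unfold Rfloor in *.
  assert (-1 < Int_part x)%Z by (apply lt_IZR; simpl; lra).
  apply IZR_le. lia.
Qed.

Lemma wealth_Wu y eta f tau Wu0 Wa0 e :
  Wu_t y eta f tau Wu0 Wa0 (S e) =
  Wu_t y eta f tau Wu0 Wa0 e
  + (n_user y tau (Wu_t y eta f tau Wu0 Wa0 e) - n_adv y (Wa_t y eta f tau Wu0 Wa0 e)) * eta
  + n_adv y (Wa_t y eta f tau Wu0 Wa0 e) * (eta - f * eta).
Proof. unfold Wu_t, Wa_t; simpl; destruct (wealth y eta f tau Wu0 Wa0 e); reflexivity. Qed.

Lemma wealth_Wa y eta f tau Wu0 Wa0 e :
  Wa_t y eta f tau Wu0 Wa0 (S e) =
  Wa_t y eta f tau Wu0 Wa0 e + n_adv y (Wa_t y eta f tau Wu0 Wa0 e) * (f * eta).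
Proof. unfold Wu_t, Wa_t; simpl; destruct (wealth y eta f tau Wu0 Wa0 e); reflexivity. Qed.

Lemma nu_ge y tau wu : 0 < y -> wu - tau <= n_user y tau wu * y.
Proof.
  intro Hy. unfold n_user. pose proof (ceil_ge ((wu - tau)/y)).
  apply Rmult_le_compat_r with (r := y) in H; [|lra].
  replace ((wu - tau) / y * y) with (wu - tau) in H by (field; lra). lra.
Qed.

Lemma na_bounds y wa : 0 < y -> 0 <= wa -> 0 <= n_adv y wa /\ n_adv y wa * y <= wa.
Proof.
  intros Hy Hw. unfold n_adv. split.
  - apply floor_nonneg. unfold Rdiv. apply Rmult_le_pos; [lra|]. left; apply Rinv_0_lt_compat; lra.
  - pose proof (floor_le (wa / y)).
    apply Rmult_le_compat_r with (r := y) in H; [|lra].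
    replace (wa / y * y) with wa in H by (field; lra). lra.
Qed.

Lemma step (y eta f tau sigma eps Wu0 wu wa nu na : R) :
  0 < y -> 0 < eta -> 0 < f < 1 -> 0 < sigma -> 0 < eps ->
  f * (1 + sigma) < 1 - sigma - eps -> tau < eps * Wu0 -> Wu0 <= wu ->
  0 <= wa -> wa <= sigma * wu ->
  wu - tau <= nu * y -> 0 <= na -> na * y <= wa ->
  let wu' := wu + (nu - na) * eta + na * (eta - f * eta) in
  let wa' := wa + na * (f * eta) in
  0 <= wa' /\ wa' <= sigma * wu' /\ Wu0 <= wu' /\
  wa' <= (1 + f * eta / y) * wa /\
  (1 + eta / y * (1 - f * sigma - eps)) * wu <= wu'.
Proof.
  intros Hy He Hf Hs Heps Hfs Ht Hw Hwa Hwas HN Hna HA wu' wa'.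
  set (K := eta / y).
  assert (HK : 0 < K) by (unfold K; unfold Rdiv; apply Rmult_lt_0_compat; [lra| apply Rinv_0_lt_compat; lra]).
  assert (HnaK : na * eta = K * (na * y)) by (unfold K; field; lra).
  assert (HnuK : nu * eta = K * (nu * y)) by (unfold K; field; lra).
  assert (Hwu' : wu' = wu + K * (nu * y) - f * K * (na * y)) by (unfold wu'; nra).
  assert (Hwa' : wa' = wa + f * K * (na * y)) by (unfold wa'; nra).
  assert (Htw : tau < eps * wu) by nra.
  assert (H1 : f * (na * y) <= f * wa) by nra.
  assert (H2 : f * wa <= f * sigma * wu) by nra.
  assert (H3 : f * (1 + sigma) * wu <= wu - tau) by nra.
  assert (H4 : (1 - f * sigma - eps) * wu <= nu * y - f * (na * y)) by nra.
  assert (H5 : 0 <= (1 - f * sigma - eps) * wu) by nra.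
  replace (f * eta / y) with (f * K) by (unfold K; field; lra).
  clearbody wu' wa' K.
  assert (P1 : 0 <= na * y) by nra.
  assert (P2 : 0 <= f * K) by nra.
  assert (P3 : f * K * (na * y) <= f * K * wa) by (apply Rmult_le_compat_l; lra).
  assert (P4 : K * ((1 - f * sigma - eps) * wu) <= K * (nu * y - f * (na * y))) by (apply Rmult_le_compat_l; lra).
  assert (P5 : f * (na * y) * (1 + sigma) <= sigma * (nu * y)) by nra.
  assert (P6 : K * (f * (na * y) * (1 + sigma)) <= K * (sigma * (nu * y))) by (apply Rmult_le_compat_l; lra).
  assert (P7 : 0 <= K * ((1 - f * sigma - eps) * wu)) by (apply Rmult_le_pos; lra).
  repeat split.
  - rewrite Hwa'. pose proof (Rmult_le_pos _ _ P2 P1). lra.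
  - rewrite Hwa', Hwu'. lra.
  - rewrite Hwu'. lra.
  - rewrite Hwa'. lra.
  - rewrite Hwu'. lra.
Qed.

Theorem theorem2 (y eta f tau Wu0 Wa0 sigma eps : R) :
  0 < y -> 0 < eta -> 0 < f < 1 -> 0 < tau ->
  0 < sigma < 1 / 2 ->
  eps < (y * f + f ^ 2 * eta) / (eta * (1 - f)) ->
  Wa0 < sigma * Wu0 ->
  f < (1 - sigma - eps) / (1 + sigma) ->
  Wa0 > y ^ 2 / (eta * eps) ->
  tau < eps * Wu0 ->
  Wu0 > tau / (1 - sigma * f) ->
  Un_cv (frontrun_fraction y eta f tau Wu0 Wa0) 0.
Proof.
  intros Hy He Hf Ht Hs _ Hw0 Hfs Hwa0 Hte Hwu0.
  assert (Hsf : 0 < 1 - sigma * f) by nra.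
  assert (HWu0 : 0 < Wu0).
  { assert (0 < tau / (1 - sigma * f)) by (apply Rdiv_lt_0_compat; lra). lra. }
  assert (Heps : 0 < eps) by nra.
  assert (HWa0 : 0 < Wa0).
  { assert (0 < y ^ 2 / (eta * eps)) by (apply Rdiv_lt_0_compat; nra). lra. }
  assert (Hfs' : f * (1 + sigma) < 1 - sigma - eps).
  { apply Rmult_lt_compat_r with (r := 1 + sigma) in Hfs; [|lra].
    replace ((1 - sigma - eps) / (1 + sigma) * (1 + sigma)) with (1 - sigma - eps) in Hfs
      by (field; lra). lra. }
  set (a := 1 + f * eta / y).
  set (b := 1 + eta / y * (1 - f * sigma - eps)).
  set (Wu := Wu_t y eta f tau Wu0 Wa0).
  set (Wa := Wa_t y eta f tau Wu0 Wa0).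
  assert (HK : 0 < eta / y) by (unfold Rdiv; apply Rmult_lt_0_compat; [lra| apply Rinv_0_lt_compat; lra]).
  assert (Ha : 1 <= a) by (unfold a; unfold Rdiv in *; nra).
  assert (Hab : a < b) by (unfold a, b; unfold Rdiv in *; nra).
  assert (Inv : forall e, 0 <= Wa e /\ Wa e <= sigma * Wu e /\ Wu0 <= Wu e /\
                   Wa e <= a ^ e * Wa0 /\ b ^ e * Wu0 <= Wu e).
  { induction e as [|e IH].
    - unfold Wa, Wu, Wa_t, Wu_t; simpl. lra.
    - destruct IH as (I1 & I2 & I3 & I4 & I5).
      pose proof (nu_ge y tau (Wu e) Hy) as HN.
      destruct (na_bounds y (Wa e) Hy I1) as [Hna HA].
      pose proof (step y eta f tau sigma eps Wu0 (Wu e) (Wa e)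
                    (n_user y tau (Wu e)) (n_adv y (Wa e))
                    Hy He Hf (proj1 Hs) Heps Hfs' Hte I3 I1 I2 HN Hna HA) as St.
      simpl in St.
      unfold Wu, Wa in *. rewrite wealth_Wu, wealth_Wa.
      destruct St as (S1 & S2 & S3 & S4 & S5).
      fold a in S4. fold b in S5.
      repeat split; try assumption; simpl.
      + assert (0 <= a) by lra. nra.
      + assert (0 <= b) by lra. nra. }
  set (C := Wa0 / (Wu0 * (1 - eps))).
  assert (Heps1 : eps < 1) by nra.
  assert (HC : 0 < C) by (unfold C; apply Rdiv_lt_0_compat; nra).
  assert (Bound : forall e, 0 <= frontrun_fraction y eta f tau Wu0 Wa0 e <= C * (a / b) ^ (e - 1)).
  { intro e. unfold frontrun_fraction. fold Wu Wa. set (k := (e - 1)%nat).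
    destruct (Inv k) as (I1 & I2 & I3 & I4 & I5).
    pose proof (nu_ge y tau (Wu k) Hy) as HN.
    destruct (na_bounds y (Wa k) Hy I1) as [Hna HA].
    assert (Htw : tau < eps * Wu k) by nra.
    assert (Hnu : 0 < n_user y tau (Wu k)) by nra.
    assert (Hbk : 0 < b ^ k) by (apply pow_lt; lra).
    assert (Hak : 0 < a ^ k) by (apply pow_lt; lra).
    assert (Hpow : (a / b) ^ k = a ^ k / b ^ k).
    { unfold Rdiv. rewrite Rpow_mult_distr, pow_inv. reflexivity. }
    rewrite Hpow. split.
    - unfold Rdiv; apply Rmult_le_pos; [lra | left; apply Rinv_0_lt_compat; lra].
    - apply Rle_trans with (Wa k / (Wu k * (1 - eps))).
      + apply Rmult_le_reg_r with (n_user y tau (Wu k)); [lra|].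
        unfold Rdiv. rewrite Rmult_assoc, Rinv_l by lra. rewrite Rmult_1_r.
        apply Rmult_le_reg_r with (Wu k * (1 - eps)); [nra|].
        replace (Wa k * / (Wu k * (1 - eps)) * n_user y tau (Wu k) * (Wu k * (1 - eps)))
          with (Wa k * n_user y tau (Wu k)) by (field; nra).
        nra.
      + unfold C, Rdiv.
        assert (HWk : 0 < Wu k * (1 - eps)) by nra.
        apply Rmult_le_reg_r with (Wu k * (1 - eps) * b ^ k); [apply Rmult_lt_0_compat; lra|].
        replace (Wa k * / (Wu k * (1 - eps)) * (Wu k * (1 - eps) * b ^ k)) with (Wa k * b ^ k)
          by (field; nra).
        replace (Wa0 * / (Wu0 * (1 - eps)) * (a ^ k * / b ^ k) * (Wu k * (1 - eps) * b ^ k))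
          with (Wa0 * a ^ k * Wu k / Wu0) by (field; nra).
        apply Rmult_le_reg_r with Wu0; [lra|].
        replace (Wa0 * a ^ k * Wu k / Wu0 * Wu0) with (Wa0 * a ^ k * Wu k) by (field; lra).
        assert (Q1 : Wa k * (b ^ k * Wu0) <= Wa k * Wu k) by (apply Rmult_le_compat_l; lra).
        assert (Q2 : Wa k * Wu k <= (a ^ k * Wa0) * Wu k) by (apply Rmult_le_compat_r; lra).
        lra. }
  intros ep Hep.
  assert (Hr : Rabs (a / b) < 1).
  { rewrite Rabs_right.
    - apply Rmult_lt_reg_r with b; [lra|]. unfold Rdiv. rewrite Rmult_assoc, Rinv_l by lra. lra.
    - left. apply Rdiv_lt_0_compat; lra. }
  destruct (pow_lt_1_zero (a / b) Hr (ep / C)) as [N HN].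
  { apply Rdiv_lt_0_compat; lra. }
  exists (S N). intros n Hn. unfold R_dist. rewrite Rminus_0_r.
  destruct (Bound n) as [B1 B2].
  rewrite Rabs_right by lra.
  assert (HNn : (n - 1 >= N)%nat) by lia.
  specialize (HN _ HNn).
  rewrite Rabs_right in HN.
  - apply Rmult_lt_compat_l with (r := C) in HN; [|lra].
    replace (C * (ep / C)) with ep in HN by (field; lra). lra.
  - left. apply pow_lt. apply Rdiv_lt_0_compat; lra.
Qed.
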